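(* Let $R$ be a ring and let $(P,Q,\psi)$ be an $R$-system satisfying Condition (FS) whose Cuntz–Pimsner ring $\mathcal{O}_{(P,Q,\psi)}$ is well-defined. Then $\mathcal{O}_{(P,Q,\psi)}$ is a unital ring that is strongly $\mathbb{Z}$-graded if and only if $\mathcal{O}_{(P,Q,\psi)}\cong_{\mathrm{gr}}\mathcal{O}_{(P',Q',\psi')}$ for some ring $R'$ and some $R'$-system $(P',Q',\psi')$ whose Cuntz–Pimsner ring is well-defined and such that: (a) $(P',Q',\psi')$ is a unital $R'$-system; (b) $(P',Q',\psi')$ satisfies Condition (FS'), and the Cuntz–Pimsner representation $(\iota^{CP}_{P'},\iota^{CP}_{Q'},\iota^{CP}_{R'},\mathcal{O}_{(P',Q',\psi')})$ is semi-full and faithful; (c) $\psi'$ is surjective.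
   Context: Rings are associative but not necessarily unital. A $\mathbb{Z}$-graded ring $S=\bigoplus_{i\in\mathbb{Z}}S_i$ has additive subgroups with $S_mS_n\subseteq S_{m+n}$ ($XY$ denoting the additive subgroup generated by products); it is strongly graded if $S_mS_n=S_{m+n}$ for all $m,n$. $\cong_{\mathrm{gr}}$ denotes graded ring isomorphism. An $R$-system is a triple $(P,Q,\psi)$ with $P,Q$ $R$-bimodules and $\psi:P\otimes_RQ\to R$ an $R$-bimodule homomorphism. It is unital if $R$ is a unital ring and $P,Q$ are unital $R$-bimodules (i.e. $1_R$ acts as identity on both sides). Put $P^{\otimes0}=Q^{\otimes0}=R$, $\psi_0(r\otimes r')=rr'$, $\psi_1=\psi$, and for $n>1$: $Q^{\otimes n}=Q^{\otimes(n-1)}\otimes_RQ$, $P^{\otimes n}=P\otimes_RP^{\otimes(n-1)}$, $\psi_n((p_1\otimes p_2)\otimes(q_2\otimes q_1))=\psi(p_1\psi_{n-1}(p_2\otimes q_2)\otimes q_1)$. A covariant representation of $(P,Q,\psi)$ is a tuple $(S,T,\sigma,B)$ with $B$ a ring, $S:P\to B$, $T:Q\to B$ additive maps, $\sigma:R\to B$ a ring homomorphism, such that $S(pr)=S(p)\sigma(r)$, $S(rp)=\sigma(r)S(p)$, $T(qr)=T(q)\sigma(r)$, $T(rq)=\sigma(r)T(q)$ and $\sigma(\psi(p\otimes q))=S(p)T(q)$. It is surjective if $B$ is generated as a ring by $\sigma(R)\cup S(P)\cup T(Q)$, and graded if it is surjective and $B$ carries a $\mathbb{Z}$-grading with $\sigma(R)\subseteq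 B_0$, $T(Q)\subseteq B_1$, $S(P)\subseteq B_{-1}$. For a graded covariant representation and $k\ge0$, $I^{(k)}_{\psi,\sigma}$ is the ideal of $B_0$ generated by $\{\sigma(\psi_k(p\otimes q)):p\in P^{\otimes k},q\in Q^{\otimes k}\}$; the representation is semi-full if $B_{-k}B_k=I^{(k)}_{\psi,\sigma}$ for all $k\ge0$. For $q\in Q,p\in P$ let $\theta_{q,p}:Q\to Q$, $x\mapsto q\psi(p\otimes x)$, and $\theta_{p,q}:P\to P$, $y\mapsto\psi(y\otimes q)p$. $\mathcal{F}_P(Q)$ (resp. $\mathcal{F}_Q(P)$) is the additive group generated by all $\theta_{q,p}$ (resp. $\theta_{p,q}$). Condition (FS): for all finite sets $\{q_i\}\subseteq Q$, $\{p_j\}\subseteq P$ there are $\Theta\in\mathcal{F}_P(Q)$, $\Phi\in\mathcal{F}_Q(P)$ with $\Theta(q_i)=q_i$, $\Phi(p_j)=p_j$. Condition (FS'): there exist $\Theta\in\mathcal{F}_P(Q)$, $\Phi\in\mathcal{F}_Q(P)$ with $\Theta(q)=q$, $\Phi(p)=p$ for all $q,p$. Let $\Delta:R\to\mathrm{End}(Q_R)$, $\Delta(r)(q)=rq$. Under (FS), for each covariant representation there is a unique ring homomorphism $\pi_{T,S}:\mathcal{F}_P(Q)\to B$ with $\pi_{T,S}(\theta_{q,p})=T(q)S(p)$. If $R$ is unital and $(P,Q,\psi)$ is unital and satisfies (FS'), then $\Delta(1_R)=\mathrm{id}_Q\in\mathcal{F}_P(Q)$, and a covariant representation is called faithful if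 $\pi_{T,S}(\Delta(1_R))=\sigma(1_R)$. The Toeplitz representation $(\iota_P,\iota_Q,\iota_R,\mathcal{T}_{(P,Q,\psi)})$ is the universal covariant representation; it is graded with $\mathcal{T}_i$ the additive group generated by the elements $\iota_Q^m(q)\iota_P^n(p)$ and $\iota_R(r)\iota_Q^m(q)\iota_P^n(p)$ with $q\in Q^{\otimes m},p\in P^{\otimes n}$, $m-n=i$ (here $\iota_Q^m(q_1\otimes\cdots\otimes q_m)=\iota_Q(q_1)\cdots\iota_Q(q_m)$, similarly $\iota_P^n$, $\iota^0=\iota_R$). Assume (FS), $\pi=\pi_{\iota_Q,\iota_P}$. An ideal $J\subseteq R$ is $\psi$-compatible if $\Delta(J)\subseteq\mathcal{F}_P(Q)$ and faithful if $J\cap\ker\Delta=\{0\}$. For $\psi$-compatible $J$, $\mathcal{T}(J)$ is the ideal of $\mathcal{T}_{(P,Q,\psi)}$ generated by $\{\iota_R(x)-\pi(\Delta(x)):x\in J\}$, $\mathcal{O}_{(P,Q,\psi)}(J)=\mathcal{T}_{(P,Q,\psi)}/\mathcal{T}(J)$ with quotient map $\rho$ and grading $\rho(\mathcal{T}_i)$, and $(\rho\iota_P,\rho\iota_Q,\rho\iota_R,\mathcal{O}(J))$ is the relative Cuntz–Pimsner representation. If there is a unique maximal $\psi$-compatible faithful ideal $J$, the Cuntz–Pimsner ring is (well-defined and equal to) $\mathcal{O}_{(P,Q,\psi)}=\mathcal{O}_{(P,Q,\psi)}(J)$, with Cuntz–Pimsner representation $(\iota^{CP}_P,\iota^{CP}_Q,\iota^{CP}_R,\mathcal{O}_{(P,Q,\psi)})$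 the corresponding relative representation. *)

(* Defs.v *)
From HB Require Import structures.
From mathcomp Require Import all_boot all_order all_algebra.
Set Implicit Arguments. Unset Strict Implicit. Unset Printing Implicit Defensive.
Import GRing.Theory.
Local Open Scope ring_scope.

Record nuRing := NuRing {
  nr_car :> zmodType;
  nr_mul : nr_car -> nr_car -> nr_car;
  nr_mulA : forall x y z, nr_mul x (nr_mul y z) = nr_mul (nr_mul x y) z;
  nr_mulDl : forall x y z, nr_mul (x + y) z = nr_mul x z + nr_mul y z;
  nr_mulDr : forall x y z, nr_mul x (y + z) = nr_mul x y + nr_mul x z }.
Arguments nr_mul {_} _ _.

Definition addmap (U V : zmodType) (f : U -> V) : Prop :=
  forall x y, f (x + y) = f x + f y.

Definition ringhom (A B : nuRing) (f : A -> B) : Prop :=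
  addmap f /\ forall x y, f (nr_mul x y) = nr_mul (f x) (f y).

Definition is_one (A : nuRing) (e : A) : Prop :=
  forall x, nr_mul e x = x /\ nr_mul x e = x.

Definition unital_ring (A : nuRing) : Prop := exists e : A, is_one e.

Definition subgroup (V : zmodType) (G : V -> Prop) : Prop :=
  G 0 /\ forall x y, G x -> G y -> G (x - y).

Definition add_span (V : zmodType) (A : V -> Prop) (x : V) : Prop :=
  forall G, subgroup G -> (forall y, A y -> G y) -> G x.

Definition prodset (B : nuRing) (X Y : B -> Prop) : B -> Prop :=
  add_span (fun z => exists x y, X x /\ Y y /\ z = nr_mul x y).

Definition subring (B : nuRing) (A : B -> Prop) : Prop :=
  subgroup A /\ forall x y, A x -> A y -> A (nr_mul x y).

Definition ring_span (B : nuRing) (G : B -> Prop) (x : B) : Prop :=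
  forall A, subring A -> (forall y, G y -> A y) -> A x.

Definition ideal (A : nuRing) (J : A -> Prop) : Prop :=
  subgroup J /\ forall r x, J x -> J (nr_mul r x) /\ J (nr_mul x r).

Record bimod (R : nuRing) := Bimod {
  bm_car :> zmodType;
  bm_l : R -> bm_car -> bm_car;
  bm_r : bm_car -> R -> bm_car;
  bm_lDr : forall r m n, bm_l r (m + n) = bm_l r m + bm_l r n;
  bm_lDl : forall r s m, bm_l (r + s) m = bm_l r m + bm_l s m;
  bm_rDl : forall m n r, bm_r (m + n) r = bm_r m r + bm_r n r;
  bm_rDr : forall m r s, bm_r m (r + s) = bm_r m r + bm_r m s;
  bm_lA : forall r s m, bm_l (nr_mul r s) m = bm_l r (bm_l s m);
  bm_rA : forall m r s, bm_r m (nr_mul r s) = bm_r (bm_r m r) s;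
  bm_lr : forall r m s, bm_r (bm_l r m) s = bm_l r (bm_r m s) }.
Arguments bm_l {_ _} _ _.
Arguments bm_r {_ _} _ _.

(* ---------- R-systems ----------
   psi : P (x)_R Q -> R, an R-bimodule map, is given (equivalently, by the
   universal property of the balanced tensor product) as a biadditive,
   R-balanced map P -> Q -> R, left R-linear in P and right R-linear in Q. *)
Record Rsystem (R : nuRing) := RSystem {
  sP : bimod R;
  sQ : bimod R;
  spsi : sP -> sQ -> R;
  spsiDl : forall p p' q, spsi (p + p') q = spsi p q + spsi p' q;
  spsiDr : forall p q q', spsi p (q + q') = spsi p q + spsi p q';
  spsi_bal : forall p r q, spsi (bm_r p r) q = spsi p (bm_l r q);
  spsi_l : forall r p q, spsi (bm_l r p) q = nr_mul r (spsi p q);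
  spsi_r : forall p q r, spsi p (bm_r q r) = nr_mul (spsi p q) r }.
Arguments spsi {_ _} _ _.

Section Sys.
Variables (R : nuRing) (X : Rsystem R).

(* element sum_i theta_{q_i,p_i} of F_P(Q), applied to x *)
Definition thetaQP (l : seq (sQ X * sP X)) (x : sQ X) : sQ X :=
  \sum_(c <- l) bm_r c.1 (spsi c.2 x).

(* element sum_i theta_{p_i,q_i} of F_Q(P), applied to y *)
Definition thetaPQ (l : seq (sP X * sQ X)) (y : sP X) : sP X :=
  \sum_(c <- l) bm_l (spsi y c.2) c.1.

Definition condFS : Prop :=
  forall (qs : seq (sQ X)) (ps : seq (sP X)),
    (exists l, forall q, q \in qs -> thetaQP l q = q) /\
    (exists l, forall p, p \in ps -> thetaPQ l p = p).

Definition condFS' : Prop :=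
  (exists l, forall q, thetaQP l q = q) /\ (exists l, forall p, thetaPQ l p = p).

Definition unital_system : Prop :=
  exists e : R, is_one e /\
    (forall p : sP X, bm_l e p = p /\ bm_r p e = p) /\
    (forall q : sQ X, bm_l e q = q /\ bm_r q e = q).

(* psi : P (x) Q -> R surjective: every r is a finite sum of psi(p_i (x) q_i) *)
Definition psi_surjective : Prop :=
  forall r : R, exists l : seq (sP X * sQ X), r = \sum_(c <- l) spsi c.1 c.2.

(* psi_k on elementary tensors (p_1 (x) ... (x) p_k) (x) (q_k (x) ... (x) q_1),
   ps = [p_1;...;p_k], qs = [q_1;...;q_k]:
   psi_k = psi(p_1 psi_{k-1}(..) (x) q_1) *)
Fixpoint psi_list (ps : seq (sP X)) (qs : seq (sQ X)) : R :=
  match ps, qs with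
  | [:: p], [:: q] => spsi p q
  | p :: ps', q :: qs' => spsi (bm_r p (psi_list ps' qs')) q
  | _, _ => 0
  end.

Definition psi_compatible (J : R -> Prop) : Prop :=
  forall x, J x -> exists l, forall q, bm_l x q = thetaQP l q.
Definition faithful_ideal (J : R -> Prop) : Prop :=
  forall x, J x -> (forall q : sQ X, bm_l x q = 0) -> x = 0.
Definition CFideal (J : R -> Prop) : Prop :=
  ideal J /\ psi_compatible J /\ faithful_ideal J.
Definition maxCFideal (J : R -> Prop) : Prop :=
  CFideal J /\
  forall J', CFideal J' -> (forall x, J x -> J' x) -> forall x, J' x -> J x.
Definition CP_well_defined : Prop :=
  exists J, maxCFideal J /\ forall J', maxCFideal J' -> forall x, J' x <-> J x.

Section Rep.
Variables (B : nuRing) (S : sP X -> B) (T : sQ X -> B) (sg : R -> B).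

Definition covrep : Prop :=
  addmap S /\ addmap T /\ ringhom sg /\
  (forall p r, S (bm_r p r) = nr_mul (S p) (sg r)) /\
  (forall r p, S (bm_l r p) = nr_mul (sg r) (S p)) /\
  (forall q r, T (bm_r q r) = nr_mul (T q) (sg r)) /\
  (forall r q, T (bm_l r q) = nr_mul (sg r) (T q)) /\
  (forall p q, sg (spsi p q) = nr_mul (S p) (T q)).

(* pi_{T,S}(Theta) = b, where Theta = sum theta_{q_i,p_i} (well defined
   under (FS)) *)
Definition pi_is (Theta : sQ X -> sQ X) (b : B) : Prop :=
  forall l, (forall q, Theta q = thetaQP l q) ->
    b = \sum_(c <- l) nr_mul (T c.1) (S c.2).

Definition surjective_rep : Prop :=
  forall b, ring_span (fun y => (exists r, y = sg r) \/ (exists p, y = S p)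
                               \/ (exists q, y = T q)) b.

Definition grading (Bi : int -> B -> Prop) : Prop :=
  (forall i, subgroup (Bi i)) /\
  (forall m n x y, Bi m x -> Bi n y -> Bi (m + n) (nr_mul x y)) /\
  (forall b, exists (s : seq int) (f : int -> B),
      uniq s /\ (forall i, Bi i (f i)) /\ b = \sum_(i <- s) f i) /\
  (forall (s : seq int) (f : int -> B), uniq s -> (forall i, Bi i (f i)) ->
      \sum_(i <- s) f i = 0 -> forall i, i \in s -> f i = 0).

Definition graded_rep (Bi : int -> B -> Prop) : Prop :=
  covrep /\ surjective_rep /\ grading Bi /\
  (forall r, Bi 0 (sg r)) /\ (forall q, Bi 1 (T q)) /\ (forall p, Bi (-1) (S p)).

(* generators of I^(k)_{psi,sigma} *)
Definition Igens (k : nat) (y : B) : Prop :=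
  if k is 0 then exists r r' : R, y = sg (nr_mul r r')
  else exists ps qs, size ps = k /\ size qs = k /\ y = sg (psi_list ps qs).

Definition Ik (Bi : int -> B -> Prop) (k : nat) (x : B) : Prop :=
  forall I : B -> Prop,
    subgroup I -> (forall y, I y -> Bi 0 y) ->
    (forall a y, Bi 0 a -> I y -> I (nr_mul a y) /\ I (nr_mul y a)) ->
    (forall y, Igens k y -> I y) -> I x.

Definition semi_full (Bi : int -> B -> Prop) : Prop :=
  forall (k : nat) x, prodset (Bi (- (k%:Z))) (Bi (k%:Z)) x <-> Ik Bi k x.

(* faithful: pi_{T,S}(Delta(1_R)) = sigma(1_R) *)
Definition faithful_rep : Prop :=
  forall e : R, is_one e -> pi_is (fun q => bm_l e q) (sg e).

(* relations of O(J): sigma(x) = pi_{T,S}(Delta(x)) for x in J *)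
Definition J_relations (J : R -> Prop) : Prop :=
  forall x, J x -> pi_is (fun q => bm_l x q) (sg x).

End Rep.

(* (S,T,sg,B) with grading Bi is (isomorphic to) the relative Cuntz--Pimsner
   representation for J: it is graded, satisfies the J-relations, and is
   universal among covariant representations satisfying them. *)
Definition rel_CP_rep (J : R -> Prop) (B : nuRing) (S : sP X -> B)
    (T : sQ X -> B) (sg : R -> B) (Bi : int -> B -> Prop) : Prop :=
  graded_rep S T sg Bi /\ J_relations S T sg J /\
  forall (B' : nuRing) (S' : sP X -> B') (T' : sQ X -> B') (sg' : R -> B'),
    covrep S' T' sg' -> J_relations S' T' sg' J ->
    exists phi : B -> B', ringhom phi /\
      (forall p, phi (S p) = S' p) /\ (forall q, phi (T q) = T' q) /\
      (forall r, phi (sg r) = sg' r).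

Definition CP_rep (B : nuRing) (S : sP X -> B) (T : sQ X -> B) (sg : R -> B)
    (Bi : int -> B -> Prop) : Prop :=
  exists J, maxCFideal J /\ rel_CP_rep J S T sg Bi.

End Sys.

Definition strongly_graded (B : nuRing) (Bi : int -> B -> Prop) : Prop :=
  forall m n x, prodset (Bi m) (Bi n) x <-> Bi (m + n) x.

Definition graded_iso (B : nuRing) (Bi : int -> B -> Prop)
    (B' : nuRing) (Bi' : int -> B' -> Prop) : Prop :=
  exists phi : B -> B', ringhom phi /\ bijective phi /\
    forall i x, Bi i x <-> Bi' i (phi x).

(* Main.v *)
Require Import Defs.
From HB Require Import structures.
From mathcomp Require Import all_boot all_order all_algebra.
From mathcomp Require Import zify.
From Stdlib Require Import ClassicalEpsilon.
Set Implicit Arguments. Unset Strict Implicit. Unset Printing Implicit Defensive.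
Import GRing.Theory.
Local Open Scope ring_scope.

Local Notation "x ⋆ y" := (nr_mul x y) (at level 40, left associativity).

Section Basic.
Variable B : nuRing.
Implicit Types x y z : B.

Lemma nmul0r x : 0 ⋆ x = 0.
Proof. have := nr_mulDl 0 0 x; rewrite addr0 => /eqP; by rewrite -subr_eq subrr eq_sym => /eqP. Qed.
Lemma nmulr0 x : x ⋆ 0 = 0.
Proof. have := nr_mulDr x 0 0; rewrite addr0 => /eqP; by rewrite -subr_eq subrr eq_sym => /eqP. Qed.
Lemma nmulNr x y : (- x) ⋆ y = - (x ⋆ y).
Proof. apply/eqP; rewrite -subr_eq0 opprK -nr_mulDl addNr nmul0r //. Qed.
Lemma nmulrN x y : x ⋆ (- y) = - (x ⋆ y).
Proof. apply/eqP; rewrite -subr_eq0 opprK -nr_mulDr addNr nmulr0 //. Qed.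
Lemma nmulBl x y z : (x - y) ⋆ z = x ⋆ z - y ⋆ z.
Proof. by rewrite nr_mulDl nmulNr. Qed.
Lemma nmulBr x y z : z ⋆ (x - y) = z ⋆ x - z ⋆ y.
Proof. by rewrite nr_mulDr nmulrN. Qed.
Lemma nmul_suml (I : Type) (l : seq I) (F : I -> B) y :
  (\sum_(i <- l) F i) ⋆ y = \sum_(i <- l) (F i ⋆ y).
Proof. elim: l => [|a l IH]; rewrite ?big_nil ?nmul0r // !big_cons nr_mulDl IH //. Qed.
Lemma nmul_sumr (I : Type) (l : seq I) (F : I -> B) y :
  y ⋆ (\sum_(i <- l) F i) = \sum_(i <- l) (y ⋆ F i).
Proof. elim: l => [|a l IH]; rewrite ?big_nil ?nmulr0 // !big_cons nr_mulDr IH //. Qed.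

Lemma subgroupD (G : B -> Prop) : subgroup G -> forall x y, G x -> G y -> G (x + y).
Proof.
move=> [G0 GB] x y Gx Gy; have := GB _ _ Gx (GB _ _ G0 Gy); by rewrite sub0r opprK.
Qed.
Lemma subgroupN (G : B -> Prop) : subgroup G -> forall x, G x -> G (- x).
Proof. move=> [G0 GB] x Gx; have := GB _ _ G0 Gx; by rewrite sub0r. Qed.
Lemma subgroup_sum (G : B -> Prop) (I : eqType) (l : seq I) (F : I -> B) :
  subgroup G -> (forall i, i \in l -> G (F i)) -> G (\sum_(i <- l) F i).
Proof.
move=> hG; elim: l => [|a l IH] H; first by rewrite big_nil; case: hG.
rewrite big_cons; apply: subgroupD => //; first by apply: H; rewrite inE eqxx.
by apply: IH => i il; apply: H; rewrite inE il orbT.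
Qed.

Lemma subgroup_pre (V : zmodType) (G : V -> Prop) (f : B -> V) :
  subgroup G -> f 0 = 0 -> (forall x y, f (x - y) = f x - f y) ->
  subgroup (fun z => G (f z)).
Proof. move=> [G0 GB] f0 fB; split; first by rewrite f0. by move=> x y; rewrite fB; apply: GB. Qed.

Lemma add_span_sub (A G : B -> Prop) x : subgroup G -> (forall y, A y -> G y) -> add_span A x -> G x.
Proof. by move=> sG AG; apply. Qed.
Lemma add_span_in (A : B -> Prop) x : A x -> add_span A x.
Proof. by move=> Ax G _; apply. Qed.
Lemma add_span_subgroup (A : B -> Prop) : subgroup (add_span A).
Proof.
split; first by move=> G [] .
move=> x y hx hy G sG AG; case: (sG) => _ GB; apply: GB; [apply: hx|apply: hy] => //.
Qed.

Lemma prodset_in (X Y : B -> Prop) x y : X x -> Y y -> prodset X Y (x ⋆ y).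
Proof. by move=> Xx Yy; apply: add_span_in; exists x, y. Qed.
Lemma prodset_sub (X Y G : B -> Prop) z : subgroup G ->
  (forall x y, X x -> Y y -> G (x ⋆ y)) -> prodset X Y z -> G z.
Proof. move=> sG H; apply: add_span_sub => // w [x [y [Xx [Yy ->]]]]; exact: H. Qed.
Lemma prodset_sum (X Y : B -> Prop) (I : eqType) (l : seq I) (F G : I -> B) :
  (forall c, X (F c) /\ Y (G c)) -> prodset X Y (\sum_(c <- l) F c ⋆ G c).
Proof.
move=> H; apply: subgroup_sum; first exact: add_span_subgroup.
by move=> c _; have [??] := H c; apply: prodset_in.
Qed.

Lemma addmap0 (V : zmodType) (f : B -> V) : addmap f -> f 0 = 0.
Proof. move=> h; have := h 0 0; rewrite addr0 => /eqP; by rewrite -subr_eq subrr eq_sym => /eqP. Qed.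
Lemma addmapN (V : zmodType) (f : B -> V) : addmap f -> forall x, f (- x) = - f x.
Proof. move=> h x; apply/eqP; rewrite -subr_eq0 opprK -h addNr addmap0 //. Qed.
Lemma addmapB (V : zmodType) (f : B -> V) : addmap f -> forall x y, f (x - y) = f x - f y.
Proof. by move=> h x y; rewrite h addmapN. Qed.
Lemma addmap_sum (V : zmodType) (f : B -> V) (I : Type) (l : seq I) (F : I -> B) :
  addmap f -> f (\sum_(i <- l) F i) = \sum_(i <- l) f (F i).
Proof. move=> h; elim: l => [|a l IH]; rewrite ?big_nil ?addmap0 // !big_cons h IH //. Qed.

End Basic.

Lemma addmap0' (U V : zmodType) (f : U -> V) : addmap f -> f 0 = 0.
Proof. move=> h; have := h 0 0; rewrite addr0 => /eqP; by rewrite -subr_eq subrr eq_sym => /eqP. Qed.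
Lemma addmapN' (U V : zmodType) (f : U -> V) : addmap f -> forall x, f (- x) = - f x.
Proof. move=> h x; apply/eqP; rewrite -subr_eq0 opprK -h addNr (addmap0' h) //. Qed.
Lemma addmap_sum' (U V : zmodType) (f : U -> V) (I : Type) (l : seq I) (F : I -> U) :
  addmap f -> f (\sum_(i <- l) F i) = \sum_(i <- l) f (F i).
Proof. move=> h; elim: l => [|a l IH]; rewrite ?big_nil ?addmap0' // !big_cons h IH //. Qed.

(* ---------- strong grading from units in B_1B_-1 and B_-1B_1 ---------- *)
Section Strong.
Variables (B : nuRing) (Bi : int -> B -> Prop).
Hypothesis hsub : forall i, subgroup (Bi i).
Hypothesis hmul : forall m n x y, Bi m x -> Bi n y -> Bi (m + n) (x ⋆ y).

Lemma Bmul m n k x y : m + n = k -> Bi m x -> Bi n y -> Bi k (x ⋆ y).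
Proof. by move=> <-; apply: hmul. Qed.

Lemma prodset_graded m n z : prodset (Bi m) (Bi n) z -> Bi (m + n) z.
Proof. apply: prodset_sub => //; exact: hmul. Qed.

Variable e : B.
Hypothesis he : is_one e.
Hypothesis h1 : prodset (Bi 1) (Bi (-1)) e.
Hypothesis h2 : prodset (Bi (-1)) (Bi 1) e.

Lemma strong_step (d k : int) : prodset (Bi d) (Bi (-d)) e ->
  prodset (Bi k) (Bi (- k)) e -> prodset (Bi (d + k)) (Bi (- (d + k))) e.
Proof.
move=> hd hk; apply: (prodset_sub _ _ hd); first exact: add_span_subgroup.
move=> x y Xx Yy.
have -> : x ⋆ y = x ⋆ e ⋆ y by have [_ ->] := he x.
apply: (prodset_sub (G := fun z => prodset (Bi (d + k)) (Bi (- (d + k))) (x ⋆ z ⋆ y))) hk.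
  apply: subgroup_pre; first exact: add_span_subgroup.
    by rewrite nmulr0 nmul0r.
  by move=> a b; rewrite nmulBr nmulBl.
move=> a b Xa Yb; rewrite nr_mulA -(nr_mulA (x ⋆ a)); apply: prodset_in.
  exact: hmul.
by apply: Bmul Yb Yy; lia.
Qed.

Lemma e_B0 : prodset (Bi 0) (Bi (- 0)) e.
Proof.
have B0e : Bi 0 e by have := prodset_graded h1; rewrite addrN.
have := prodset_in B0e B0e; rewrite oppr0; by have [-> _] := he e.
Qed.

Lemma e_all k : prodset (Bi k) (Bi (- k)) e.
Proof.
case: k => n.
  elim: n => [|n IH]; first exact: e_B0.
  by have := strong_step h1 IH; rewrite -(addrC (Posz n)) -PoszD addn1.
rewrite NegzE; elim: n => [|n IH].
  by have := strong_step h2 e_B0; rewrite addr0 opprK.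
have := strong_step h2 IH; by have -> : -1 + - (n.+1)%:Z = - (n.+2)%:Z by lia.
Qed.

Lemma strong_of_unit : strongly_graded Bi.
Proof.
move=> m n x; split; first exact: prodset_graded.
move=> hx; have -> : x = e ⋆ x by have [-> _] := he x.
apply: (prodset_sub (G := fun z => prodset (Bi m) (Bi n) (z ⋆ x)) (X := Bi m) (Y := Bi (- m))); last exact: e_all.
  apply: subgroup_pre; first exact: add_span_subgroup.
    by rewrite nmul0r.
  by move=> a b; rewrite nmulBl.
move=> a b Xa Yb; rewrite -nr_mulA; apply: prodset_in => //.
by apply: Bmul Yb hx; lia.
Qed.
End Strong.

Lemma prodset_map (B B' : nuRing) (Bi : int -> B -> Prop) (Bi' : int -> B' -> Prop)
  (g : B' -> B) : ringhom g -> (forall i y, Bi' i y -> Bi i (g y)) ->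
  forall m n y, prodset (Bi' m) (Bi' n) y -> prodset (Bi m) (Bi n) (g y).
Proof.
move=> [ga gm] hg m n y.
apply: (prodset_sub (G := fun z => prodset (Bi m) (Bi n) (g z))).
  apply: subgroup_pre; first exact: add_span_subgroup.
    exact: addmap0'.
  by move=> a b; rewrite ga (addmapN' ga).
by move=> a b Xa Yb; rewrite gm; apply: prodset_in; apply: hg.
Qed.

Lemma reverse_dir (R : nuRing) (X : Rsystem R) (B : nuRing) (Bi : int -> B -> Prop)
  (hgr : grading Bi) (R' : nuRing) (X' : Rsystem R')
  (hu : unital_system X') (hfs : condFS' X') (hps : psi_surjective X')
  (B' : nuRing) (S' : sP X' -> B') (T' : sQ X' -> B') (sg' : R' -> B')
  (Bi' : int -> B' -> Prop) (hCP' : CP_rep S' T' sg' Bi')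
  (hf : faithful_rep S' T' sg') (hiso : graded_iso Bi Bi') :
  unital_ring B /\ strongly_graded Bi.
Proof.
case: hCP' => J [_ [[hcov [hsurj [hgr' [hdeg0 [hdeg1 hdegm]]]]] _]].
case: hcov => hS [hT [hsg [hSr [hSl [hTr [hTl hpsi]]]]]].
case: hu => e' [he' [hP hQ]].
set E := sg' e'.
have hE : is_one E.
  move=> x; apply: (hsurj x (fun b => E ⋆ b = b /\ b ⋆ E = b)).
    split; first split.
    - by rewrite nmulr0 nmul0r.
    - by move=> a b [h1 h2] [h3 h4]; rewrite nmulBr nmulBl h1 h2 h3 h4.
    - by move=> a b [h1 h2] [h3 h4]; rewrite nr_mulA h1 -nr_mulA h4.
  move=> y [[r ->]|[[p ->]|[q ->]]].
  - by rewrite /E -!hsg.2; have [-> ->] := he' r.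
  - by rewrite /E -hSr -hSl; have [-> ->] := hP p.
  - by rewrite /E -hTr -hTl; have [-> ->] := hQ q.
have E1 : prodset (Bi' 1) (Bi' (-1)) E.
  case: hfs => [[l hl] _].
  rewrite /E (hf e' he' l); last by move=> q; rewrite hl; have [-> _] := hQ q.
  by apply: prodset_sum => c; split.
have E2 : prodset (Bi' (-1)) (Bi' 1) E.
  have [l hl] := hps e'.
  rewrite /E hl (addmap_sum' _ _ hsg.1).
  under eq_bigr => c _ do rewrite hpsi.
  by apply: prodset_sum => c; split.
case: hiso => phi [hphi [[g gphi phig] hgi]].
have hg : ringhom g.
  split.
    by move=> x y; rewrite -{1}(phig x) -{1}(phig y) -hphi.1 gphi.
  by move=> x y; rewrite -{1}(phig x) -{1}(phig y) -hphi.2 gphi.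
have hgi' : forall i y, Bi' i y -> Bi i (g y).
  by move=> i y; rewrite hgi phig.
case: hgr => hsub [hmul _].
have ge : is_one (g E).
  move=> x; rewrite -(gphi x) -!hg.2; by have [-> ->] := hE (phi x).
split; first by exists (g E).
apply: (strong_of_unit hsub hmul ge).
  exact: (prodset_map hg hgi').
exact: (prodset_map hg hgi').
Qed.
Definition asb (P : Prop) : bool := if excluded_middle_informative P then true else false.
Lemma asbT (P : Prop) : P -> asb P.
Proof. by rewrite /asb; case: excluded_middle_informative. Qed.
Lemma asbE (P : Prop) : asb P -> P.
Proof. by rewrite /asb; case: excluded_middle_informative. Qed.

Section SubZ.
Variables (V : zmodType) (G : V -> Prop) (hG : subgroup G).
Definition subz of subgroup G := {x : V | asb (G x)}.
HB.instance Definition _ := Choice.on (subz hG).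
Definition mkz x (h : G x) : subz hG := exist _ x (asbT h).
Lemma subzP (a : subz hG) : G (val a).
Proof. exact: asbE (valP a). Qed.
Lemma G0 : G 0. Proof. by case: hG. Qed.
Lemma GD x y : G x -> G y -> G (x + y).
Proof. case: hG => g0 gB hx hy; have := gB _ _ hx (gB _ _ g0 hy); by rewrite sub0r opprK. Qed.
Lemma GN x : G x -> G (- x).
Proof. case: hG => g0 gB hx; have := gB _ _ g0 hx; by rewrite sub0r. Qed.
Definition zz : subz hG := mkz G0.
Definition zadd (a b : subz hG) : subz hG := mkz (GD (subzP a) (subzP b)).
Definition zopp (a : subz hG) : subz hG := mkz (GN (subzP a)).
Lemma zaddA : associative zadd. Proof. by move=> a b c; apply: val_inj; rewrite /= addrA. Qed.
Lemma zaddC : commutative zadd. Proof. by move=> a b; apply: val_inj; rewrite /= addrC. Qed.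
Lemma zadd0 : left_id zz zadd. Proof. by move=> a; apply: val_inj; rewrite /= add0r. Qed.
Lemma zaddN : left_inverse zz zopp zadd. Proof. by move=> a; apply: val_inj; rewrite /= addNr. Qed.
HB.instance Definition _ := GRing.isZmodule.Build (subz hG) zaddA zaddC zadd0 zaddN.
Lemma val_add (a b : subz hG) : val (a + b) = val a + val b. Proof. by []. Qed.
Lemma val_opp (a : subz hG) : val (- a) = - val a. Proof. by []. Qed.
Lemma val_zero : val (0 : subz hG) = 0. Proof. by []. Qed.
End SubZ.
Local Notation cid := constructive_indefinite_description.

Lemma sum_sup (V : zmodType) (s u : seq int) (F : int -> V) :
  uniq s -> uniq u -> {subset s <= u} ->
  \sum_(i <- u) (if i \in s then F i else 0) = \sum_(i <- s) F i.
Proof.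
move=> us uu su; rewrite -big_mkcond -big_filter; apply: perm_big.
apply: uniq_perm; [exact: filter_uniq | exact: us |].
move=> i; rewrite mem_filter; case: (boolP (i \in s)) => //= h; by rewrite (su _ h).
Qed.

Section Fwd.
Variables (B : nuRing) (Bi : int -> B -> Prop).
Hypothesis hgr : grading Bi.
Hypothesis hsg : strongly_graded Bi.
Variable e0 : B.
Hypothesis he0 : is_one e0.

Lemma hsub i : subgroup (Bi i). Proof. by case: hgr. Qed.
Lemma hmul m n x y : Bi m x -> Bi n y -> Bi (m + n) (x ⋆ y). Proof. move=> hx hy; case: hgr => _ [hm _]; exact: hm. Qed.
Lemma hmul' m n k x y : m + n = k -> Bi m x -> Bi n y -> Bi k (x ⋆ y).
Proof. by move=> <-; apply: hmul. Qed.
Lemma hdec b : exists s f, uniq s /\ (forall i, Bi i (f i)) /\ b = \sum_(i <- s) f i.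
Proof. by case: hgr => _ [_ [hd hu]]; apply: hd. Qed.
Lemma huniq (s : seq int) (f : int -> B) : uniq s -> (forall i, Bi i (f i)) ->
      \sum_(i <- s) f i = 0 -> forall i, i \in s -> f i = 0.
Proof. case: hgr => _ [_ [hd hu]]; exact: hu. Qed.
Lemma B0 i : Bi i 0. Proof. by case: (hsub i). Qed.
Lemma BD i x y : Bi i x -> Bi i y -> Bi i (x + y). Proof. by move=> hx hy; apply: (@subgroupD _ (Bi i) (hsub i)). Qed.
Lemma BN i x : Bi i x -> Bi i (- x). Proof. by move=> hx; apply: (@subgroupN _ (Bi i) (hsub i)). Qed.
Lemma BB i x y : Bi i x -> Bi i y -> Bi i (x - y). Proof. by move=> ??; apply: BD => //; apply: BN. Qed.
Lemma Bsum i (I : eqType) (l : seq I) (F : I -> B) : (forall c, Bi i (F c)) -> Bi i (\sum_(c <- l) F c).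
Proof. by move=> h; apply: subgroup_sum => //; exact: hsub. Qed.

Definition sdec b : seq int := proj1_sig (cid _ (hdec b)).
Lemma sdec_spec b : exists f, uniq (sdec b) /\ (forall i, Bi i (f i)) /\ b = \sum_(i <- sdec b) f i.
Proof. exact: proj2_sig (cid _ (hdec b)). Qed.
Definition fdec b : int -> B := proj1_sig (cid _ (sdec_spec b)).
Lemma fdec_spec b : uniq (sdec b) /\ (forall i, Bi i (fdec b i)) /\ b = \sum_(i <- sdec b) fdec b i.
Proof. exact: proj2_sig (cid _ (sdec_spec b)). Qed.
Lemma sdec_uniq b : uniq (sdec b). Proof. by case: (fdec_spec b). Qed.

Definition comp i b := if i \in sdec b then fdec b i else 0.

Lemma comp_hom i b : Bi i (comp i b).
Proof. rewrite /comp; case: ifP => _; [by case: (fdec_spec b) => _ [] | exact: B0]. Qed.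
Lemma comp_out i b : i \notin sdec b -> comp i b = 0.
Proof. by rewrite /comp => /negbTE ->. Qed.
Lemma comp_sup b (u : seq int) : uniq u -> {subset sdec b <= u} -> \sum_(i <- u) comp i b = b.
Proof.
move=> uu su; rewrite /comp sum_sup //; last exact: sdec_uniq.
by case: (fdec_spec b) => _ [].
Qed.
Lemma comp_sum b : \sum_(i <- sdec b) comp i b = b.
Proof. by apply: comp_sup => //; exact: sdec_uniq. Qed.

Lemma dec_uniq (s t : seq int) (f g : int -> B) : uniq s -> uniq t ->
  (forall i, Bi i (f i)) -> (forall i, Bi i (g i)) ->
  \sum_(i <- s) f i = \sum_(i <- t) g i ->
  forall i, (if i \in s then f i else 0) = (if i \in t then g i else 0).
Proof.
move=> us ut hf hg hst i.
set u := undup (s ++ t).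
have uu : uniq u by apply: undup_uniq.
have su : {subset s <= u} by move=> j js; rewrite mem_undup mem_cat js.
have tu : {subset t <= u} by move=> j jt; rewrite mem_undup mem_cat jt orbT.
set h := fun j => (if j \in s then f j else 0) - (if j \in t then g j else 0).
have hh : forall j, Bi j (h j).
  by move=> j; rewrite /h; apply: BB; case: ifP => _; rewrite ?hf ?hg //; apply: B0.
have hs : \sum_(j <- u) h j = 0.
  by rewrite /h sumrB !sum_sup // hst subrr.
case iu : (i \in u).
  by apply/eqP; rewrite -subr_eq0; apply/eqP; apply: (huniq uu hh hs).
have /negbTE -> : i \notin s by apply/negP => /su; rewrite iu.
have /negbTE -> : i \notin t by apply/negP => /tu; rewrite iu.
by [].
Qed.

Lemma comp_dec b (s : seq int) (f : int -> B) : uniq s -> (forall i, Bi i (f i)) ->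
  b = \sum_(i <- s) f i -> forall i, comp i b = if i \in s then f i else 0.
Proof.
move=> us hf hb i; rewrite /comp; apply: dec_uniq => //.
- exact: sdec_uniq.
- by case: (fdec_spec b) => _ [].
- by case: (fdec_spec b) => _ [_ <-].
Qed.

Lemma comp_homog n h : Bi n h -> forall i, comp i h = if i == n then h else 0.
Proof.
move=> hh i; rewrite (@comp_dec h [:: n] (fun j => if j == n then h else 0)) //.
- by rewrite inE; case: (i == n).
- by move=> j; case: eqP => [->|_] //; apply: B0.
- by rewrite big_seq1 eqxx.
Qed.

Lemma comp_add i a b : comp i (a + b) = comp i a + comp i b.
Proof.
set s := undup (sdec a ++ sdec b).
have us : uniq s by apply: undup_uniq.
rewrite (@comp_dec (a + b) s (fun j => comp j a + comp j b)) //.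
- case: ifP => // /negbT h; rewrite !comp_out ?addr0 //; apply/negP => hh; move/negP: h; apply;
  by rewrite mem_undup mem_cat hh ?orbT.
- by move=> j; apply: BD; apply: comp_hom.
- rewrite big_split /= !comp_sup //.
  + by move=> j jb; rewrite mem_undup mem_cat jb orbT.
  + by move=> j ja; rewrite mem_undup mem_cat ja.
Qed.

Definition e := comp 0 e0.

Lemma e_left_hom n x : Bi n x -> e ⋆ x = x.
Proof.
move=> hx.
set t := map (fun i => i + n) (sdec e0).
have ut : uniq t by rewrite map_inj_uniq ?sdec_uniq //; move=> a b /addIr.
have hsum : \sum_(i <- [:: n]) (fun j => if j == n then x else 0) i =
            \sum_(j <- t) (comp (j - n) e0 ⋆ x).
  rewrite big_seq1 eqxx big_map.
  under eq_bigr => i _ do rewrite addrK.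
  by rewrite -nmul_suml comp_sum; case: (he0 x).
have u1 : uniq [:: n] by [].
have h1 : forall j, Bi j (if j == n then x else 0) by move=> j; case: eqP => [->|_] //; apply: B0.
have h2 : forall j, Bi j (comp (j - n) e0 ⋆ x).
  by move=> j; apply: (hmul' (m := j - n) (n := n)); [lia | apply: comp_hom | ].
have := dec_uniq u1 ut h1 h2 hsum n.
rewrite inE !eqxx subrr; case: (n \in t) => // ->; by rewrite nmulr0.
Qed.

Lemma e_right_hom n x : Bi n x -> x ⋆ e = x.
Proof.
move=> hx.
set t := map (fun i => n + i) (sdec e0).
have ut : uniq t by rewrite map_inj_uniq ?sdec_uniq //; move=> a b /addrI.
have hsum : \sum_(i <- [:: n]) (fun j => if j == n then x else 0) i =
            \sum_(j <- t) (x ⋆ comp (j - n) e0).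
  rewrite big_seq1 eqxx big_map.
  have E i : n + i - n = i by lia.
  under eq_bigr => i _ do rewrite E.
  by rewrite -nmul_sumr comp_sum; case: (he0 x).
have u1 : uniq [:: n] by [].
have h1 : forall j, Bi j (if j == n then x else 0) by move=> j; case: eqP => [->|_] //; apply: B0.
have h2 : forall j, Bi j (x ⋆ comp (j - n) e0).
  by move=> j; apply: (hmul' (m := n) (n := j - n)); [lia | | apply: comp_hom].
have := dec_uniq u1 ut h1 h2 hsum n.
rewrite inE !eqxx subrr; case: (n \in t) => // ->; by rewrite nmul0r.
Qed.

Lemma he : is_one e.
Proof.
move=> b; rewrite -{1 2 3 4}(comp_sum b) nmul_sumr nmul_suml; split.
  by apply: eq_bigr => i _; apply: (e_left_hom (comp_hom i b)).
by apply: eq_bigr => i _; apply: (e_right_hom (comp_hom i b)).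
Qed.
Lemma Be : Bi 0 e. Proof. exact: comp_hom. Qed.
Lemma eL x : e ⋆ x = x. Proof. by case: (he x). Qed.
Lemma eR x : x ⋆ e = x. Proof. by case: (he x). Qed.



Definition Z i := subz (hsub i).
Definition mk i x (h : Bi i x) : Z i := mkz (hsub i) h.
Lemma valZ i (a : Z i) : Bi i (val a). Proof. exact: (@subzP _ _ (hsub i) a). Qed.
Definition zm i j k (hk : i + j = k) (a : Z i) (b : Z j) : Z k :=
  mk (hmul' hk (valZ a) (valZ b)).

Definition h00 : (0:int) + 0 = 0 := erefl.
Definition h0m : (0:int) + -1 = -1 := erefl.
Definition hm0 : (-1:int) + 0 = -1 := erefl.
Definition h01 : (0:int) + 1 = 1 := erefl.
Definition h10 : (1:int) + 0 = 1 := erefl.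
Definition hm1 : (-1:int) + 1 = 0 := erefl.

Definition rmul : Z 0 -> Z 0 -> Z 0 := zm h00.
Lemma rmulA x y z : rmul x (rmul y z) = rmul (rmul x y) z.
Proof. by apply: val_inj; rewrite /= nr_mulA. Qed.
Lemma rmulDl x y z : rmul (x + y) z = rmul x z + rmul y z.
Proof. by apply: val_inj; rewrite /= nr_mulDl. Qed.
Lemma rmulDr x y z : rmul x (y + z) = rmul x y + rmul x z.
Proof. by apply: val_inj; rewrite /= nr_mulDr. Qed.
Definition R' : nuRing := NuRing rmulA rmulDl rmulDr.

Section Bim.
Variable d : int.
Hypothesis hd0 : 0 + d = d.
Hypothesis hd1 : d + 0 = d.
Definition bl (r : R') (p : Z d) : Z d := zm hd0 r p.
Definition br (p : Z d) (r : R') : Z d := zm hd1 p r.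
Lemma bl_Dr r m n : bl r (m + n) = bl r m + bl r n.
Proof. by apply: val_inj; rewrite /= nr_mulDr. Qed.
Lemma bl_Dl r s m : bl (r + s) m = bl r m + bl s m.
Proof. by apply: val_inj; rewrite /= nr_mulDl. Qed.
Lemma br_Dl m n r : br (m + n) r = br m r + br n r.
Proof. by apply: val_inj; rewrite /= nr_mulDl. Qed.
Lemma br_Dr m r s : br m (r + s) = br m r + br m s.
Proof. by apply: val_inj; rewrite /= nr_mulDr. Qed.
Lemma bl_A r s m : bl (nr_mul r s) m = bl r (bl s m).
Proof. by apply: val_inj; rewrite /= nr_mulA. Qed.
Lemma br_A m r s : br m (nr_mul r s) = br (br m r) s.
Proof. by apply: val_inj; rewrite /= nr_mulA. Qed.
Lemma b_lr r m s : br (bl r m) s = bl r (br m s).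
Proof. by apply: val_inj; rewrite /= nr_mulA. Qed.
Definition Bimd : bimod R' := Bimod bl_Dr bl_Dl br_Dl br_Dr bl_A br_A b_lr.
End Bim.

Definition P' : bimod R' := Bimd h0m hm0.
Definition Q' : bimod R' := Bimd h01 h10.
Definition psi' (p : P') (q : Q') : R' := zm hm1 p q.
Lemma psiDl p p' q : psi' (p + p') q = psi' p q + psi' p' q.
Proof. by apply: val_inj; rewrite /= nr_mulDl. Qed.
Lemma psiDr p q q' : psi' p (q + q') = psi' p q + psi' p q'.
Proof. by apply: val_inj; rewrite /= nr_mulDr. Qed.
Lemma psi_bal p r q : psi' (bm_r p r) q = psi' p (bm_l r q).
Proof. by apply: val_inj; rewrite /= nr_mulA. Qed.
Lemma psi_l r p q : psi' (bm_l r p) q = nr_mul r (psi' p q).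
Proof. by apply: val_inj; rewrite /= nr_mulA. Qed.
Lemma psi_r p q r : psi' p (bm_r q r) = nr_mul (psi' p q) r.
Proof. by apply: val_inj; rewrite /= nr_mulA. Qed.
Definition X' : Rsystem R' := RSystem psiDl psiDr psi_bal psi_l psi_r.

Definition Sv (p : sP X') : B := val p.
Definition Tv (q : sQ X') : B := val q.
Definition sgv (r : R') : B := val r.

Lemma val_sum i (I : Type) (l : seq I) (F : I -> Z i) :
  val (\sum_(c <- l) F c) = \sum_(c <- l) val (F c).
Proof. by apply: (addmap_sum' (f := fun a : Z i => val a)). Qed.

Lemma prodset_subz m n z : prodset (Bi m) (Bi n) z ->
  exists l : seq (Z m * Z n), z = \sum_(c <- l) val c.1 ⋆ val c.2.
Proof.
apply: (prodset_sub (G := fun z => exists l : seq (Z m * Z n), z = \sum_(c <- l) val c.1 ⋆ val c.2)).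
  split; first by exists [::]; rewrite big_nil.
  move=> x y [l1 ->] [l2 ->].
  exists (l1 ++ map (fun c => (- c.1, c.2)) l2).
  rewrite big_cat big_map /= -sumrN; congr (_ + _); apply: eq_bigr => c _.
  by rewrite nmulNr.
move=> x y hx hy; exists [:: (mk hx, mk hy)]; by rewrite big_seq1.
Qed.

Lemma e_in1 : prodset (Bi 1) (Bi (-1)) e. Proof. exact: ((hsg 1 (-1) e).2 Be). Qed.
Lemma e_in2 : prodset (Bi (-1)) (Bi 1) e. Proof. exact: ((hsg (-1) 1 e).2 Be). Qed.

Definition lx : seq (Z 1 * Z (-1)) := proj1_sig (cid _ (prodset_subz e_in1)).
Lemma eLx : e = \sum_(c <- lx) val c.1 ⋆ val c.2.
Proof. exact: proj2_sig (cid _ (prodset_subz e_in1)). Qed.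
Definition lu : seq (Z (-1) * Z 1) := proj1_sig (cid _ (prodset_subz e_in2)).
Lemma eLu : e = \sum_(c <- lu) val c.1 ⋆ val c.2.
Proof. exact: proj2_sig (cid _ (prodset_subz e_in2)). Qed.

Definition eR' : R' := mk Be.

Lemma X'_unital : unital_system X'.
Proof.
exists eR'; split; first by move=> x; split; apply: val_inj; rewrite /= ?eL ?eR.
by split=> p; split; apply: val_inj; rewrite /= ?eL ?eR.
Qed.

Lemma val_thetaQP (l : seq (sQ X' * sP X')) (q : sQ X') :
  val (thetaQP l q) = \sum_(c <- l) val c.1 ⋆ (val c.2 ⋆ val q).
Proof. by rewrite /thetaQP val_sum. Qed.
Lemma val_thetaPQ (l : seq (sP X' * sQ X')) (p : sP X') :
  val (thetaPQ l p) = \sum_(c <- l) (val p ⋆ val c.2) ⋆ val c.1.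
Proof. by rewrite /thetaPQ val_sum. Qed.

Lemma X'_FS' : condFS' X'.
Proof.
split.
  exists lx => q; apply: val_inj; rewrite val_thetaQP.
  under eq_bigr do rewrite nr_mulA.
  by rewrite -nmul_suml -eLx eL.
exists (map (fun c => (c.2, c.1)) lx) => p; apply: val_inj; rewrite val_thetaPQ big_map /=.
under eq_bigr do rewrite -nr_mulA.
by rewrite -nmul_sumr -eLx eR.
Qed.

Lemma X'_psi_surj : psi_surjective X'.
Proof.
move=> r; exists (map (fun c => (@bm_l _ P' r c.1, c.2)) lu); apply: val_inj.
rewrite val_sum big_map /=.
under eq_bigr do rewrite -nr_mulA.
by rewrite -nmul_sumr -eLu eR.
Qed.

Lemma JR (x : B) (l : seq (Z 1 * Z (-1))) :
  (forall q : Z 1, x ⋆ val q = \sum_(d <- l) val d.1 ⋆ (val d.2 ⋆ val q)) ->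
  x = \sum_(d <- l) val d.1 ⋆ val d.2.
Proof.
move=> H.
rewrite -[x in LHS]eR eLx nmul_sumr.
under eq_bigr do rewrite nr_mulA H nmul_suml.
rewrite exchange_big /=; apply: eq_bigr => d _.
under eq_bigr do rewrite nr_mulA -nr_mulA.
by rewrite -nmul_sumr -eLx eR.
Qed.

Lemma JRv (x : R') (l : seq (sQ X' * sP X')) :
  (forall q, bm_l x q = thetaQP l q) -> val x = \sum_(c <- l) val c.1 ⋆ val c.2.
Proof.
move=> H; apply: (JR (l := l)) => q.
by rewrite -val_thetaQP -H.
Qed.

Definition Jt : R' -> Prop := fun _ => True.

Lemma Jt_CF : CFideal X' Jt.
Proof.
split; first by split; [split | ].
split.
  move=> x _; exists (map (fun c => (@bm_l _ Q' x c.1, c.2)) lx) => q.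
  apply: val_inj; rewrite val_thetaQP big_map /=.
  under eq_bigr do rewrite !nr_mulA.
  rewrite -nmul_suml; under eq_bigr do rewrite -nr_mulA.
  by rewrite -nmul_sumr -eLx eR.
move=> x _ H; apply: val_inj.
rewrite /= -[LHS]eR eLx nmul_sumr.
have Hc : forall q : Z 1, val x ⋆ val q = 0 by move=> q; exact: (congr1 val (H q)).
under eq_bigr do rewrite nr_mulA Hc nmul0r.
by rewrite big1.
Qed.

Lemma Jt_max : maxCFideal X' Jt.
Proof. by split; [exact: Jt_CF | ]. Qed.

Lemma X'_wd : CP_well_defined X'.
Proof.
exists Jt; split; first exact: Jt_max.
move=> J' [_ hmax] x; split => // _.
by apply: (hmax Jt Jt_CF).
Qed.

Lemma int_ind3 (P : int -> Prop) : P 0 ->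
  (forall n : nat, P n%:Z -> P (n.+1)%:Z) ->
  (forall n : nat, P (- n%:Z) -> P (- (n.+1)%:Z)) -> forall k, P k.
Proof.
move=> h0 hp hn; case=> n; first by elim: n.
rewrite NegzE; elim: n => [|n IH]; first by apply: (hn 0%N); rewrite oppr0.
exact: hn.
Qed.

Lemma sum_expand (l : seq (Z 1 * Z (-1))) (x y : B) (hl : e = \sum_(c <- l) val c.1 ⋆ val c.2) :
  \sum_(c <- l) (x ⋆ val c.1) ⋆ (val c.2 ⋆ y) = x ⋆ y.
Proof.
have -> : x ⋆ y = x ⋆ e ⋆ y by rewrite eR.
rewrite hl nmul_sumr nmul_suml; apply: eq_bigr => c _; by rewrite !nr_mulA.
Qed.
Lemma sum_expand' (l : seq (Z (-1) * Z 1)) (x y : B) (hl : e = \sum_(c <- l) val c.1 ⋆ val c.2) :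
  \sum_(c <- l) (x ⋆ val c.1) ⋆ (val c.2 ⋆ y) = x ⋆ y.
Proof.
have -> : x ⋆ y = x ⋆ e ⋆ y by rewrite eR.
rewrite hl nmul_sumr nmul_suml; apply: eq_bigr => c _; by rewrite !nr_mulA.
Qed.

Lemma surj_val : surjective_rep Sv Tv sgv.
Proof.
move=> b A hA hgen.
have hAs : subgroup A by case: hA.
have hAm : forall x y, A x -> A y -> A (x ⋆ y) by case: hA.
have hom : forall k h, Bi k h -> A h.
  apply: int_ind3.
  - by move=> h hh; apply: hgen; left; exists (mk hh).
  - move=> n IH h hh.
    rewrite -(eL h) -(sum_expand e h eLx).
    apply: subgroup_sum => // c _; rewrite eL; apply: hAm.
      by apply: hgen; right; right; exists c.1.
    by apply: IH; apply: (hmul' _ (valZ c.2) hh); lia.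
  - move=> n IH h hh.
    rewrite -(eL h) -(sum_expand' e h eLu).
    apply: subgroup_sum => // c _; rewrite eL; apply: hAm.
      by apply: hgen; right; left; exists c.1.
    by apply: IH; apply: (hmul' _ (valZ c.2) hh); lia.
rewrite -(comp_sum b); apply: subgroup_sum => // i _.
exact: (hom _ _ (comp_hom i b)).
Qed.

Lemma cov_val : covrep Sv Tv sgv.
Proof. by do !split. Qed.

Lemma JRel_val : J_relations Sv Tv sgv Jt.
Proof. move=> x _ l H; exact: JRv. Qed.

Lemma faithful_val : faithful_rep Sv Tv sgv.
Proof. move=> x _ l H; exact: JRv. Qed.

Lemma graded_val : graded_rep Sv Tv sgv Bi.
Proof.
split; first exact: cov_val.
split; first exact: surj_val.
split; first exact: hgr.
by split; [move=> r; apply: valZ | split; move=> q; apply: valZ].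
Qed.

Lemma psi_gen n : exists L : seq (seq (sP X') * seq (sQ X')),
  (forall c, c \in L -> size c.1 = n.+1 /\ size c.2 = n.+1) /\
  e = \sum_(c <- L) val (psi_list c.1 c.2).
Proof.
elim: n => [|n [L [hL hLe]]].
  exists (map (fun c => ([:: c.1], [:: c.2])) lu); split.
    by move=> c /mapP [d _ ->].
  by rewrite big_map /= eLu.
exists [seq (c.1 :: d.1, c.2 :: d.2) | c <- lu, d <- L]; split.
  move=> z /allpairsP [[c d] [_ dL ->]] /=.
  by have [-> ->] := hL d dL.
rewrite big_allpairs_dep.
rewrite {1}eLu; apply: eq_bigr => c _.
rewrite -[val c.1]eR hLe nmul_sumr nmul_suml; apply: eq_big_seq => d dL.
have [] := hL d dL; case: d dL => [[|p ps] [|q qs]] //= _ _ _.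
Qed.

Lemma semi_val : semi_full X' sgv Bi.
Proof.
move=> k x.
apply: (iff_trans (hsg _ _ x)); rewrite addNr.
split.
  move=> hx I hI hI0 hIc hgens.
  suff Ie : I e by have := (hIc x e hx Ie).1; rewrite eR.
  case: k hgens => [|n] hgens.
    by have := hgens (sgv (nr_mul eR' eR')) (ex_intro _ eR' (ex_intro _ eR' erefl)); rewrite /sgv /= eL.
  have [L [hL ->]] := psi_gen n.
  apply: subgroup_sum => // c cL; apply: hgens.
  by have [h1 h2] := hL c cL; exists c.1, c.2.
move=> hx; apply: hx.
- exact: hsub.
- by [].
- by move=> a y ha hy; split; apply: (hmul' _ ha hy) || apply: (hmul' _ hy ha).
case: k => [|n] y.
  by move=> [r [r' ->]]; apply: valZ.
by move=> [ps [qs [_ [_ ->]]]]; apply: valZ.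
Qed.

Lemma sum_expandG i j (l : seq (Z i * Z j)) (x y : B) (hl : e = \sum_(c <- l) val c.1 ⋆ val c.2) :
  \sum_(c <- l) (x ⋆ val c.1) ⋆ (val c.2 ⋆ y) = x ⋆ y.
Proof.
have -> : x ⋆ y = x ⋆ e ⋆ y by rewrite eR.
rewrite hl nmul_sumr nmul_suml; apply: eq_bigr => c _; by rewrite !nr_mulA.
Qed.

Lemma dbl0 (V : zmodType) (x : V) : x = x + x -> x = 0.
Proof. move=> h; apply: (addrI x); by rewrite addr0 -h. Qed.

Section Univ.
Variables (C : nuRing) (S2 : sP X' -> C) (T2 : sQ X' -> C) (sg2 : R' -> C).
Hypothesis hcov : covrep S2 T2 sg2.
Hypothesis hJ : J_relations S2 T2 sg2 Jt.

Section Ph.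
Variables (dd dd' : int) (L : seq (Z dd * Z dd')) (sg U V : B -> C).
Hypothesis hdd : dd + dd' = 0.
Hypothesis hL : e = \sum_(c <- L) val c.1 ⋆ val c.2.
Hypothesis sA : forall a b, Bi 0 a -> Bi 0 b -> sg (a + b) = sg a + sg b.
Hypothesis sM : forall a b, Bi 0 a -> Bi 0 b -> sg (a ⋆ b) = sg a ⋆ sg b.
Hypothesis UA : forall a b, Bi dd a -> Bi dd b -> U (a + b) = U a + U b.
Hypothesis UR : forall a r, Bi dd a -> Bi 0 r -> U (a ⋆ r) = U a ⋆ sg r.
Hypothesis UL : forall r a, Bi 0 r -> Bi dd a -> sg r ⋆ U a = U (r ⋆ a).
Hypothesis VU : forall a c, Bi dd' a -> Bi dd c -> V a ⋆ U c = sg (a ⋆ c).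

Fixpoint ph (k : nat) (b : B) : C :=
  if k is k'.+1 then \sum_(c <- L) U (val c.1) ⋆ ph k' (val c.2 ⋆ b) else sg b.

Definition deg (k : nat) : int := k%:Z * dd.
Lemma deg_step k : dd' + deg k.+1 = deg k.
Proof. rewrite /deg; have -> : dd' = - dd by lia. rewrite -addn1 PoszD mulrDl mul1r; lia. Qed.
Lemma deg0 : deg 0 = 0. Proof. by rewrite /deg mul0r. Qed.

Lemma ph_add k a b : Bi (deg k) a -> Bi (deg k) b -> ph k (a + b) = ph k a + ph k b.
Proof.
elim: k a b => [|k IH] a b ha hb /=.
  by apply: sA; rewrite -deg0.
rewrite -big_split; apply: eq_bigr => c _ /=.
have h1 : Bi (deg k) (val c.2 ⋆ a) by apply: (hmul' (deg_step k) (valZ c.2)).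
have h2 : Bi (deg k) (val c.2 ⋆ b) by apply: (hmul' (deg_step k) (valZ c.2)).
by rewrite nr_mulDr IH // nr_mulDr.
Qed.

Lemma ph0 k : ph k 0 = 0.
Proof. by apply: dbl0; rewrite -ph_add ?addr0 //; apply: B0. Qed.

Lemma ph_sum k (I : eqType) (l : seq I) (F : I -> B) :
  (forall i, Bi (deg k) (F i)) -> ph k (\sum_(i <- l) F i) = \sum_(i <- l) ph k (F i).
Proof.
move=> hF; elim: l => [|a l IH]; first by rewrite !big_nil ph0.
by rewrite !big_cons ph_add ?IH //; apply: Bsum.
Qed.

Lemma U0 : U 0 = 0.
Proof. by apply: dbl0; rewrite -UA ?addr0 //; apply: B0. Qed.
Lemma U_sum (I : eqType) (l : seq I) (F : I -> B) :
  (forall i, Bi dd (F i)) -> U (\sum_(i <- l) F i) = \sum_(i <- l) U (F i).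
Proof.
move=> hF; elim: l => [|a l IH]; first by rewrite !big_nil U0.
by rewrite !big_cons UA ?IH //; apply: Bsum.
Qed.

Lemma U_exp a : Bi dd a -> U a = \sum_(c <- L) U (val c.1) ⋆ sg (val c.2 ⋆ a).
Proof.
move=> ha.
rewrite -{1}(eL a) -(sum_expandG e a hL) U_sum; last first.
  move=> c; rewrite eL; apply: (hmul' _ (valZ c.1) (hmul' _ (valZ c.2) ha)); [| reflexivity]; lia.
apply: eq_bigr => c _; rewrite eL UR //; first exact: valZ.
by apply: (hmul' _ (valZ c.2) ha); lia.
Qed.

Lemma ph_L0 k r b : Bi 0 r -> Bi (deg k) b -> ph k (r ⋆ b) = sg r ⋆ ph k b.
Proof.
elim: k r b => [|k IH] r b hr hb /=.
  by rewrite deg0 in hb; apply: sM.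
rewrite nmul_sumr.
have E1 : forall c : Z dd * Z dd', sg r ⋆ (U (val c.1) ⋆ ph k (val c.2 ⋆ b)) =
   \sum_(d <- L) U (val d.1) ⋆ ph k ((val d.2 ⋆ (r ⋆ val c.1)) ⋆ (val c.2 ⋆ b)).
  move=> c; have hrc : Bi dd (r ⋆ val c.1) by apply: (hmul' _ hr (valZ c.1)); lia.
  rewrite nr_mulA UL //; last exact: valZ.
  rewrite (U_exp hrc) nmul_suml; apply: eq_bigr => d _.
  rewrite -nr_mulA (IH (val d.2 ⋆ (r ⋆ val c.1)) (val c.2 ⋆ b)) //.
  all: first [by apply: (hmul' _ (valZ d.2) hrc); lia | exact: (hmul' (deg_step k) (valZ c.2) hb) | idtac].

rewrite (eq_bigr _ (fun c _ => E1 c)).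
rewrite exchange_big /=; apply: eq_bigr => d _; rewrite -nmul_sumr -ph_sum.
  have -> : \sum_(i <- L) (val d.2 ⋆ (r ⋆ val i.1)) ⋆ (val i.2 ⋆ b) = val d.2 ⋆ (r ⋆ b).
    by under eq_bigr do rewrite (nr_mulA (val d.2) r); rewrite sum_expandG // nr_mulA.
  by [].
move=> c; apply: (hmul' _ (hmul' (k:=0) _ (valZ d.2) (hmul' (k:=dd) _ hr (valZ c.1))) (hmul' (deg_step k) (valZ c.2) hb)).
all: rewrite ?add0r; lia.
Qed.

Lemma ph_U k a b : Bi dd a -> Bi (deg k) b -> ph k.+1 (a ⋆ b) = U a ⋆ ph k b.
Proof.
move=> ha hb /=; rewrite (U_exp ha) nmul_suml; apply: eq_bigr => c _.
rewrite nr_mulA ph_L0 ?nr_mulA //.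
by apply: (hmul' _ (valZ c.2) ha); lia.
Qed.

Lemma ph_V k a b : Bi dd' a -> Bi (deg k.+1) b -> ph k (a ⋆ b) = V a ⋆ ph k.+1 b.
Proof.
move=> ha hb /=; rewrite nmul_sumr.
have hc2 : forall c : Z dd * Z dd', Bi (deg k) (val c.2 ⋆ b).
  by move=> c; apply: (hmul' (deg_step k) (valZ c.2) hb).
have hac : forall c : Z dd * Z dd', Bi 0 (a ⋆ val c.1).
  by move=> c; apply: (hmul' _ ha (valZ c.1)); lia.
have E : forall c : Z dd * Z dd', V a ⋆ (U (val c.1) ⋆ ph k (val c.2 ⋆ b)) =
    ph k ((a ⋆ val c.1) ⋆ (val c.2 ⋆ b)).
  move=> c; rewrite nr_mulA VU //; last exact: valZ.
  by rewrite (ph_L0 (hac c) (hc2 c)).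
rewrite (eq_bigr _ (fun c _ => E c)) -ph_sum ?sum_expandG //.
move=> c; apply: (hmul' _ (hac c) (hc2 c)); by rewrite add0r.
Qed.
End Ph.

Definition liftB i (f : Z i -> C) (b : B) : C := if insub b is Some a then f a else 0.
Lemma liftB_mk i (f : Z i -> C) x (hx : Bi i x) : liftB f x = f (mk hx).
Proof. change (liftB f (val (mk hx)) = f (mk hx)); by rewrite /liftB valK. Qed.

Definition sgB : B -> C := liftB (i := 0) sg2.
Definition TB : B -> C := liftB (i := 1) T2.
Definition SB : B -> C := liftB (i := -1) S2.

Lemma cS : addmap S2. Proof. by case: hcov. Qed.
Lemma cT : addmap T2. Proof. by case: hcov => _ []. Qed.
Lemma csg : ringhom sg2. Proof. by case: hcov => _ [_ []]. Qed.
Lemma cSr p r : S2 (bm_r p r) = nr_mul (S2 p) (sg2 r). Proof. by case: hcov => _ [_ [_ []]]. Qed.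
Lemma cSl r p : S2 (bm_l r p) = nr_mul (sg2 r) (S2 p). Proof. by case: hcov => _ [_ [_ [_ []]]]. Qed.
Lemma cTr q r : T2 (bm_r q r) = nr_mul (T2 q) (sg2 r). Proof. by case: hcov => _ [_ [_ [_ [_ []]]]]. Qed.
Lemma cTl r q : T2 (bm_l r q) = nr_mul (sg2 r) (T2 q). Proof. by case: hcov => _ [_ [_ [_ [_ [_ []]]]]]. Qed.
Lemma cpsi p q : sg2 (spsi p q) = nr_mul (S2 p) (T2 q). Proof. by case: hcov => _ [_ [_ [_ [_ [_ [_ ]]]]]]. Qed.

Lemma sA_B a b : Bi 0 a -> Bi 0 b -> sgB (a + b) = sgB a + sgB b.
Proof.
move=> ha hb; rewrite /sgB (liftB_mk _ ha) (liftB_mk _ hb) (liftB_mk _ (BD ha hb)) -csg.1.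
by congr sg2; apply: val_inj.
Qed.
Lemma sM_B a b : Bi 0 a -> Bi 0 b -> sgB (a ⋆ b) = sgB a ⋆ sgB b.
Proof.
move=> ha hb; rewrite /sgB (liftB_mk _ ha) (liftB_mk _ hb) (liftB_mk _ (hmul' h00 ha hb)) -csg.2.
by congr sg2; apply: val_inj.
Qed.
Lemma TA_B a b : Bi 1 a -> Bi 1 b -> TB (a + b) = TB a + TB b.
Proof.
move=> ha hb; rewrite /TB (liftB_mk _ ha) (liftB_mk _ hb) (liftB_mk _ (BD ha hb)) -cT.
by congr T2; apply: val_inj.
Qed.
Lemma SA_B a b : Bi (-1) a -> Bi (-1) b -> SB (a + b) = SB a + SB b.
Proof.
move=> ha hb; rewrite /SB (liftB_mk _ ha) (liftB_mk _ hb) (liftB_mk _ (BD ha hb)) -cS.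
by congr S2; apply: val_inj.
Qed.
Lemma TR_B a r : Bi 1 a -> Bi 0 r -> TB (a ⋆ r) = TB a ⋆ sgB r.
Proof.
move=> ha hr; rewrite /TB /sgB (liftB_mk _ ha) (liftB_mk _ hr) (liftB_mk _ (hmul' h10 ha hr)).
rewrite -(cTr (mk ha : sQ X')); by congr T2; apply: val_inj.
Qed.
Lemma SR_B a r : Bi (-1) a -> Bi 0 r -> SB (a ⋆ r) = SB a ⋆ sgB r.
Proof.
move=> ha hr; rewrite /SB /sgB (liftB_mk _ ha) (liftB_mk _ hr) (liftB_mk _ (hmul' hm0 ha hr)).
rewrite -(cSr (mk ha : sP X')); by congr S2; apply: val_inj.
Qed.
Lemma TL_B r a : Bi 0 r -> Bi 1 a -> sgB r ⋆ TB a = TB (r ⋆ a).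
Proof.
move=> hr ha; rewrite /TB /sgB (liftB_mk _ ha) (liftB_mk _ hr) (liftB_mk _ (hmul' h01 hr ha)).
rewrite -(cTl _ (mk ha : sQ X')); by congr T2; apply: val_inj.
Qed.
Lemma SL_B r a : Bi 0 r -> Bi (-1) a -> sgB r ⋆ SB a = SB (r ⋆ a).
Proof.
move=> hr ha; rewrite /SB /sgB (liftB_mk _ ha) (liftB_mk _ hr) (liftB_mk _ (hmul' h0m hr ha)).
rewrite -(cSl _ (mk ha : sP X')); by congr S2; apply: val_inj.
Qed.
Lemma VUp a c : Bi (-1) a -> Bi 1 c -> SB a ⋆ TB c = sgB (a ⋆ c).
Proof.
move=> ha hc; rewrite /SB /TB /sgB (liftB_mk _ ha) (liftB_mk _ hc) (liftB_mk _ (hmul' hm1 ha hc)).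
rewrite -(cpsi (mk ha : sP X') (mk hc : sQ X')); by congr sg2; apply: val_inj.
Qed.
Lemma VUm a c : Bi 1 a -> Bi (-1) c -> TB a ⋆ SB c = sgB (a ⋆ c).
Proof.
move=> ha hc; have hac : Bi 0 (a ⋆ c) by apply: (hmul' _ ha hc).
rewrite /SB /TB /sgB (liftB_mk _ ha) (liftB_mk _ hc) (liftB_mk _ hac).
have := hJ (x := (mk hac : R')) I (l := [:: ((mk ha : sQ X'), (mk hc : sP X'))]).
rewrite big_seq1 => -> //.
move=> q; apply: val_inj; rewrite val_thetaQP big_seq1 /=; by rewrite nr_mulA.
Qed.

Definition php := ph lx sgB TB.
Definition phm := ph lu sgB SB.

Ltac solve_ph := first [ exact: eLx | exact: eLu | exact: sA_B | exact: sM_B | exact: TA_B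
  | exact: SA_B | exact: TR_B | exact: SR_B | exact: TL_B | exact: SL_B | exact: VUp | exact: VUm
  | done | lia ].

Lemma degp k : deg 1 k = k%:Z. Proof. by rewrite /deg mulr1. Qed.
Lemma degm k : deg (-1) k = - k%:Z. Proof. by rewrite /deg mulrN1. Qed.

Lemma php_add k a b : Bi k%:Z a -> Bi k%:Z b -> php k (a + b) = php k a + php k b.
Proof. move=> ha hb; apply: ph_add; rewrite ?degp //; solve_ph. Qed.
Lemma phm_add k a b : Bi (- k%:Z) a -> Bi (- k%:Z) b -> phm k (a + b) = phm k a + phm k b.
Proof. move=> ha hb; apply: (ph_add (dd' := 1)); rewrite ?degm //; solve_ph. Qed.
Lemma php_L0 k r b : Bi 0 r -> Bi k%:Z b -> php k (r ⋆ b) = sgB r ⋆ php k b.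
Proof. move=> hr hb; apply: (ph_L0 (dd' := -1)); rewrite ?degp //; solve_ph. Qed.
Lemma phm_L0 k r b : Bi 0 r -> Bi (- k%:Z) b -> phm k (r ⋆ b) = sgB r ⋆ phm k b.
Proof. move=> hr hb; apply: (ph_L0 (dd' := 1)); rewrite ?degm //; solve_ph. Qed.
Lemma php_U k a b : Bi 1 a -> Bi k%:Z b -> php k.+1 (a ⋆ b) = TB a ⋆ php k b.
Proof. move=> ha hb; apply: (ph_U (dd' := -1)); rewrite ?degp //; solve_ph. Qed.
Lemma phm_U k a b : Bi (-1) a -> Bi (- k%:Z) b -> phm k.+1 (a ⋆ b) = SB a ⋆ phm k b.
Proof. move=> ha hb; apply: (ph_U (dd' := 1)); rewrite ?degm //; solve_ph. Qed.
Lemma php_V k a b : Bi (-1) a -> Bi (k.+1)%:Z b -> php k (a ⋆ b) = SB a ⋆ php k.+1 b.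
Proof. move=> ha hb; apply: (ph_V (dd' := -1)); rewrite ?degp //; solve_ph. Qed.
Lemma phm_V k a b : Bi 1 a -> Bi (- (k.+1)%:Z) b -> phm k (a ⋆ b) = TB a ⋆ phm k.+1 b.
Proof. move=> ha hb; apply: (ph_V (dd' := 1)); rewrite ?degm //; solve_ph. Qed.

Definition phz (k : int) : B -> C := match k with Posz n => php n | Negz n => phm n.+1 end.
Lemma phz_pos n : phz n%:Z = php n. Proof. by []. Qed.
Lemma phz_neg n : phz (- n%:Z) = phm n. Proof. by case: n. Qed.
Lemma intPN (k : int) : exists n : nat, k = n%:Z \/ k = - n%:Z.
Proof. case: k => n; [by exists n; left | by exists n.+1; right; rewrite NegzE]. Qed.

Lemma Z_add k a b : Bi k a -> Bi k b -> phz k (a + b) = phz k a + phz k b.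
Proof.
have [n [->|->]] := intPN k => ha hb.
  by rewrite phz_pos; apply: php_add.
by rewrite phz_neg; apply: phm_add.
Qed.
Lemma Z0 k : phz k 0 = 0.
Proof. by apply: dbl0; rewrite -Z_add ?addr0 //; apply: B0. Qed.
Lemma Z_sum k (I : eqType) (l : seq I) (F : I -> B) :
  (forall i, Bi k (F i)) -> phz k (\sum_(i <- l) F i) = \sum_(i <- l) phz k (F i).
Proof.
move=> hF; elim: l => [|a l IH]; first by rewrite !big_nil Z0.
by rewrite !big_cons Z_add ?IH //; apply: Bsum.
Qed.
Lemma Z_L0 k r b : Bi 0 r -> Bi k b -> phz k (r ⋆ b) = sgB r ⋆ phz k b.
Proof.
have [n [->|->]] := intPN k => hr hb.
  by rewrite phz_pos; apply: php_L0.
by rewrite phz_neg; apply: phm_L0.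
Qed.
Lemma Z_T k q b : Bi 1 q -> Bi k b -> phz (k + 1) (q ⋆ b) = TB q ⋆ phz k b.
Proof.
have [n [->|->]] := intPN k => hq hb.
  by rewrite (_ : n%:Z + 1 = (n.+1)%:Z); [rewrite !phz_pos; apply: php_U | lia].
case: n hb => [|m] hb.
  rewrite oppr0 add0r (_ : 1 = (1%N)%:Z) // phz_pos (_ : 0 = (0%N)%:Z) // phz_pos.
  by apply: php_U; rewrite oppr0 in hb.
rewrite (_ : - (m.+1)%:Z + 1 = - m%:Z); last by lia.
by rewrite !phz_neg; apply: phm_V.
Qed.
Lemma Z_S k p b : Bi (-1) p -> Bi k b -> phz (k - 1) (p ⋆ b) = SB p ⋆ phz k b.
Proof.
have [n [->|->]] := intPN k => hp hb.
  case: n hb => [|m] hb.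
    rewrite (_ : 0%N%:Z - 1 = - (1%N)%:Z) // phz_neg (_ : phz 0%N%:Z = phm 0) //.
    by apply: phm_U.
  rewrite (_ : (m.+1)%:Z - 1 = m%:Z); last by lia.
  by rewrite !phz_pos; apply: php_V.
rewrite (_ : - n%:Z - 1 = - (n.+1)%:Z); last by lia.
by rewrite !phz_neg; apply: phm_U.
Qed.

Lemma expand1 a : a = \sum_(c <- lx) val c.1 ⋆ (val c.2 ⋆ a).
Proof. rewrite -[a in LHS]eL -(sum_expandG e a eLx); apply: eq_bigr => c _; by rewrite eL. Qed.
Lemma expand2 a : a = \sum_(c <- lu) val c.1 ⋆ (val c.2 ⋆ a).
Proof. rewrite -[a in LHS]eL -(sum_expandG e a eLu); apply: eq_bigr => c _; by rewrite eL. Qed.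

Lemma Z_mul m : forall a n b, Bi m a -> Bi n b -> phz (m + n) (a ⋆ b) = phz m a ⋆ phz n b.
Proof.
elim/int_ind3: m.
- move=> a n b ha hb; rewrite add0r; exact: Z_L0.
- move=> k IH a n b ha hb.
  have E : forall c : Z 1 * Z (-1), phz ((k.+1)%:Z + n) ((val c.1 ⋆ (val c.2 ⋆ a)) ⋆ b) =
      TB (val c.1) ⋆ (phz k (val c.2 ⋆ a) ⋆ phz n b).
    move=> c; have hca : Bi k (val c.2 ⋆ a) by apply: (hmul' _ (valZ c.2) ha); lia.
    rewrite -nr_mulA (_ : (k.+1)%:Z + n = (k%:Z + n) + 1); last by lia.
    by rewrite (Z_T (valZ c.1) (hmul' (erefl _) hca hb)) (IH _ _ _ hca hb).
  rewrite {1}(expand1 a) nmul_suml Z_sum; last first.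
    move=> c; apply: (hmul' _ (hmul' (k := (k.+1)%:Z) _ (valZ c.1) (hmul' (k := k%:Z) _ (valZ c.2) ha)) hb); lia.
  rewrite (eq_bigr _ (fun c _ => E c)).
  have -> : phz (k.+1)%:Z a = \sum_(c <- lx) TB (val c.1) ⋆ phz k (val c.2 ⋆ a) by [].
  rewrite nmul_suml; apply: eq_bigr => c _; by rewrite nr_mulA.
- move=> k IH a n b ha hb.
  have E : forall c : Z (-1) * Z 1, phz (- (k.+1)%:Z + n) ((val c.1 ⋆ (val c.2 ⋆ a)) ⋆ b) =
      SB (val c.1) ⋆ (phz (- k%:Z) (val c.2 ⋆ a) ⋆ phz n b).
    move=> c; have hca : Bi (- k%:Z) (val c.2 ⋆ a) by apply: (hmul' _ (valZ c.2) ha); lia.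
    rewrite -nr_mulA (_ : - (k.+1)%:Z + n = (- k%:Z + n) - 1); last by lia.
    by rewrite (Z_S (valZ c.1) (hmul' (erefl _) hca hb)) (IH _ _ _ hca hb).
  rewrite {1}(expand2 a) nmul_suml Z_sum; last first.
    move=> c; apply: (hmul' _ (hmul' (k := - (k.+1)%:Z) _ (valZ c.1) (hmul' (k := - k%:Z) _ (valZ c.2) ha)) hb); lia.
  rewrite (eq_bigr _ (fun c _ => E c)).
  have -> : phz (- (k.+1)%:Z) a = \sum_(c <- lu) SB (val c.1) ⋆ phz (- k%:Z) (val c.2 ⋆ a).
    by rewrite !phz_neg.
  rewrite nmul_suml; apply: eq_bigr => c _; by rewrite nr_mulA.
Qed.

Definition phi (b : B) : C := \sum_(i <- sdec b) phz i (comp i b).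

Lemma phi_sup b (u : seq int) : uniq u -> {subset sdec b <= u} ->
  phi b = \sum_(i <- u) phz i (comp i b).
Proof.
move=> uu su; rewrite /phi -(@sum_sup C (sdec b) u (fun i => phz i (comp i b))) ?sdec_uniq //.
apply: eq_bigr => i _; case: ifP => // /negbT h; by rewrite comp_out ?Z0.
Qed.

Lemma phi_hom n h : Bi n h -> phi h = phz n h.
Proof.
move=> hh; set u := undup (n :: sdec h).
have uu : uniq u by apply: undup_uniq.
rewrite (@phi_sup h u uu); last by move=> i ih; rewrite mem_undup inE ih orbT.
have E : forall i, phz i (comp i h) = if i \in [:: n] then phz i h else 0.
  by move=> i; rewrite (comp_homog hh) inE; case: eqP => // _; rewrite Z0.
rewrite (eq_bigr _ (fun i _ => E i)) sum_sup //; first by rewrite big_seq1.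
by move=> i; rewrite inE => /eqP ->; rewrite mem_undup inE eqxx.
Qed.

Lemma phi_add : addmap phi.
Proof.
move=> a b; set u := undup (sdec a ++ sdec b ++ sdec (a + b)).
have uu : uniq u by apply: undup_uniq.
rewrite (@phi_sup a u uu); last by move=> i ih; rewrite mem_undup !mem_cat ih.
rewrite (@phi_sup b u uu); last by move=> i ih; rewrite mem_undup !mem_cat ih orbT.
rewrite (@phi_sup (a + b) u uu); last by move=> i ih; rewrite mem_undup !mem_cat ih !orbT.
rewrite -big_split; apply: eq_bigr => i _; rewrite comp_add Z_add //; exact: comp_hom.
Qed.

Lemma phi_comp a : phi a = \sum_(i <- sdec a) phi (comp i a).
Proof. rewrite {1}/phi; apply: eq_bigr => i _; by rewrite (phi_hom (comp_hom i a)). Qed.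

Lemma phi_mul a b : phi (a ⋆ b) = phi a ⋆ phi b.
Proof.
rewrite [in RHS](phi_comp a) [in RHS](phi_comp b) nmul_suml.
rewrite -[a in LHS](comp_sum a) -[b in LHS](comp_sum b) nmul_suml (addmap_sum _ _ phi_add).
apply: eq_bigr => i _; rewrite nmul_sumr (addmap_sum _ _ phi_add) nmul_sumr.
apply: eq_bigr => j _.
rewrite (phi_hom (comp_hom i a)) (phi_hom (comp_hom j b)) -(Z_mul (comp_hom i a) (comp_hom j b)).
by apply: phi_hom; apply: hmul; apply: comp_hom.
Qed.

Lemma univ_val : exists phi : B -> C, ringhom phi /\
  (forall p, phi (Sv p) = S2 p) /\ (forall q, phi (Tv q) = T2 q) /\
  (forall r, phi (sgv r) = sg2 r).
Proof.
exists phi; split; first by split; [exact: phi_add | exact: phi_mul].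
split.
  move=> p; rewrite (phi_hom (valZ p)) -[- 1]/(- (1%N)%:Z) phz_neg.
  have E : SB (val p) = \sum_(c <- lu) SB (val c.1) ⋆ sgB (val c.2 ⋆ val p).
    by apply: (U_exp (dd' := 1)); first [solve_ph | exact: valZ].
  have Sp : SB (val p) = S2 p by rewrite /SB (liftB_mk _ (valZ p)); congr S2; apply: val_inj.
  by rewrite -Sp E.
split.
  move=> q; rewrite (phi_hom (valZ q)) -[1]/((1%N)%:Z) phz_pos.
  have E : TB (val q) = \sum_(c <- lx) TB (val c.1) ⋆ sgB (val c.2 ⋆ val q).
    by apply: (U_exp (dd' := -1)); first [solve_ph | exact: valZ].
  have Tq : TB (val q) = T2 q by rewrite /TB (liftB_mk _ (valZ q)); congr T2; apply: val_inj.
  by rewrite -Tq E.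
move=> r; rewrite (phi_hom (valZ r)) /=.
by rewrite /sgB (liftB_mk _ (valZ r)); congr sg2; apply: val_inj.
Qed.
End Univ.

Lemma forward_dir : exists (R' : nuRing) (X' : Rsystem R'),
     CP_well_defined X' /\
     unital_system X' /\
     condFS' X' /\
     psi_surjective X' /\
     exists (B' : nuRing) (S' : sP X' -> B') (T' : sQ X' -> B') (sg' : R' -> B')
            (Bi' : int -> B' -> Prop),
       CP_rep S' T' sg' Bi' /\ semi_full X' sg' Bi' /\ faithful_rep S' T' sg' /\
       graded_iso Bi Bi'.
Proof.
exists R', X'; split; first exact: X'_wd.
split; first exact: X'_unital.
split; first exact: X'_FS'.
split; first exact: X'_psi_surj.
exists B, Sv, Tv, sgv, Bi; split.
  exists Jt; split; first exact: Jt_max.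
  split; first exact: graded_val.
  split; first exact: JRel_val.
  move=> C S2 T2 sg2 hc hJ; exact: (univ_val hc hJ).
split; first exact: semi_val.
split; first exact: faithful_val.
exists id; split; first by split.
by split; [exists id | ].
Qed.
End Fwd.

Unset Implicit Arguments.
Theorem mainTheorem3 (R : nuRing) (X : Rsystem R)
    (hFS : condFS X) (hwd : CP_well_defined X)
    (B : nuRing) (S : sP X -> B) (T : sQ X -> B) (sg : R -> B)
    (Bi : int -> B -> Prop) (hCP : CP_rep S T sg Bi) :
  (unital_ring B /\ strongly_graded Bi) <->
  (exists (R' : nuRing) (X' : Rsystem R'),
     CP_well_defined X' /\
     unital_system X' /\
     condFS' X' /\
     psi_surjective X' /\
     exists (B' : nuRing) (S' : sP X' -> B') (T' : sQ X' -> B') (sg' : R' -> B')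
            (Bi' : int -> B' -> Prop),
       CP_rep S' T' sg' Bi' /\ semi_full X' sg' Bi' /\ faithful_rep S' T' sg' /\
       graded_iso Bi Bi').
Proof.
have hgr : grading Bi by case: hCP => J [_ [[_ [_ [hg _]]] _]].
split.
  move=> [[e0 he0] hsg]; exact: (forward_dir hgr hsg he0).
move=> [R' [X' [_ [hu [hfs [hps [B' [S' [T' [sg' [Bi' [hCP' [_ [hf hiso]]]]]]]]]]]]]].
exact: (reverse_dir X hgr hu hfs hps hCP' hf hiso).
Qed.
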